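(* Let $G$ be an $(\alpha,\beta,N)$-admissible group. There exist $\alpha',\beta'>0$ (depending only on $\alpha,\beta,N$) such that for every finitely generated subgroup $H\le G$, exactly one of the following holds: (i) $H$ has a finite-index subgroup with infinite centre; (ii) $H$ is $(\alpha',\beta')$-perfect.
   Context: For a subset $U$ of a group, $U^n=\{u_1\cdots u_n:u_i\in U\}$. A finite subset $U$ has $(\alpha,\beta)$-growth if $|U^n|\ge(\alpha|U|)^{\beta n}$ for all $n\in\mathbb{N}$. A finitely generated group is $(\alpha,\beta)$-perfect if every finite generating set of every finite-index subgroup of it has $(\alpha,\beta)$-growth. A group $G$ is $(\alpha,\beta,N)$-admissible if for every finitely generated subgroup $H\le G$ there exist a subgroup $K\le H$ of index at most $N$ and a torsion-free subgroup $T\le Z(K)$ such that $K/T$ is $(\alpha,\beta)$-perfect. *)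

(* Defs.v *)
From Stdlib Require Import Reals Lia List Classical FunctionalExtensionality
  PropExtensionality ProofIrrelevance.
Open Scope R_scope.

Record Group := mkGroup {
  gcar :> Type;
  gmul : gcar -> gcar -> gcar;
  gone : gcar;
  ginv : gcar -> gcar;
  gassoc : forall x y z, gmul x (gmul y z) = gmul (gmul x y) z;
  gmul1g : forall x, gmul gone x = x;
  gmulg1 : forall x, gmul x gone = x;
  gmulVg : forall x, gmul (ginv x) x = gone;
  gmulgV : forall x, gmul x (ginv x) = gone }.

Arguments gmul {g}.
Arguments gone {g}.
Arguments ginv {g}.
Arguments gassoc {g} x y z.
Arguments gmul1g {g} x.
Arguments gmulg1 {g} x.
Arguments gmulVg {g} x.
Arguments gmulgV {g} x.

Definition subset {T : Type} (A B : T -> Prop) := forall x, A x -> B x.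

Definition card_is {T : Type} (A : T -> Prop) (n : nat) : Prop :=
  exists l : list T, NoDup l /\ (forall x, In x l <-> A x) /\ length l = n.

Definition finite_pred {T : Type} (A : T -> Prop) : Prop := exists n, card_is A n.

Definition is_subgroup (G : Group) (H : G -> Prop) : Prop :=
  H gone /\ (forall x y, H x -> H y -> H (gmul x y)) /\ (forall x, H x -> H (ginv x)).

Definition gen (G : Group) (U : G -> Prop) : G -> Prop :=
  fun x => forall L, is_subgroup G L -> subset U L -> L x.

Definition generates (G : Group) (U L : G -> Prop) : Prop :=
  forall x, gen G U x <-> L x.

Definition fg_sub (G : Group) (H : G -> Prop) : Prop :=
  exists U, finite_pred U /\ subset U H /\ generates G U H.

Definition index_le (G : Group) (L H : G -> Prop) (N : nat) : Prop :=
  exists l : list G, (length l <= N)%nat /\ (forall x, In x l -> H x) /\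
    forall h, H h -> exists x, In x l /\ L (gmul (ginv x) h).

Definition finite_index (G : Group) (L H : G -> Prop) : Prop :=
  exists N, index_le G L H N.

Definition center (G : Group) (K : G -> Prop) : G -> Prop :=
  fun x => K x /\ forall y, K y -> gmul x y = gmul y x.

Fixpoint gpow {G : Group} (x : G) (n : nat) : G :=
  match n with O => gone | S m => gmul x (gpow x m) end.

Definition torsion_free (G : Group) (T : G -> Prop) : Prop :=
  forall x, T x -> forall n, (1 <= n)%nat -> gpow x n = gone -> x = gone.

Fixpoint pow_set {G : Group} (U : G -> Prop) (n : nat) : G -> Prop :=
  match n with
  | O => fun x => x = gone
  | S m => fun x => exists u y, U u /\ pow_set U m y /\ x = gmul u y
  end.

(** real power a^x, with the convention a^x = 0 for a <= 0 (only a = 0 occurs). *)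
Definition rpow (a x : R) : R := if Rle_dec a 0 then 0 else Rpower a x.

Definition has_growth (G : Group) (U : G -> Prop) (alpha beta : R) : Prop :=
  finite_pred U /\
  forall cu, card_is U cu -> forall (n c : nat), (1 <= n)%nat ->
    card_is (pow_set U n) c -> rpow (alpha * INR cu) (beta * INR n) <= INR c.

Definition perfect_sub (G : Group) (H : G -> Prop) (alpha beta : R) : Prop :=
  fg_sub G H /\
  forall L, is_subgroup G L -> subset L H -> finite_index G L H ->
    forall U, finite_pred U -> subset U L -> generates G U L ->
      has_growth G U alpha beta.

Definition perfect (G : Group) (alpha beta : R) : Prop :=
  perfect_sub G (fun _ => True) alpha beta.

Definition coset (G : Group) (k : G) (T : G -> Prop) : G -> Prop :=
  fun x => exists t, T t /\ x = gmul k t.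
Definition setmul (G : Group) (A B : G -> Prop) : G -> Prop :=
  fun x => exists a b, A a /\ B b /\ x = gmul a b.
Definition setinv (G : Group) (A : G -> Prop) : G -> Prop :=
  fun x => exists a, A a /\ x = ginv a.
Definition is_coset (G : Group) (K T : G -> Prop) (S : G -> Prop) : Prop :=
  exists k, K k /\ S = coset G k T.
Definition qcar (G : Group) (K T : G -> Prop) : Type := {S : G -> Prop | is_coset G K T S}.

Lemma inv_mul (G : Group) (x y : G) : ginv (gmul x y) = gmul (ginv y) (ginv x).
Proof.
  assert (E : gmul (gmul x y) (gmul (ginv y) (ginv x)) = gone).
  { rewrite <- gassoc, (gassoc y), gmulgV, gmul1g, gmulgV. reflexivity. }
  rewrite <- (gmulg1 (ginv (gmul x y))), <- E, gassoc, gmulVg, gmul1g.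
  reflexivity.
Qed.

Lemma inv_inv (G : Group) (x : G) : ginv (ginv x) = x.
Proof.
  transitivity (gmul (ginv (ginv x)) (gmul (ginv x) x)).
  - rewrite gmulVg, gmulg1; reflexivity.
  - rewrite gassoc, gmulVg, gmul1g; reflexivity.
Qed.

Section Quot.
Variables (G : Group) (K T : G -> Prop).
Hypotheses (hK : is_subgroup G K) (hT : is_subgroup G T)
  (hZ : subset T (center G K)).

Lemma coset_mul k k' : K k' ->
  setmul G (coset G k T) (coset G k' T) = coset G (gmul k k') T.
Proof.
  destruct hT as [T1 [TM TI]]. intro Kk'.
  apply functional_extensionality; intro x; apply propositional_extensionality; split.
  - intros [a [b [[t [Tt ->]] [[t' [Tt' ->]] ->]]]].
    exists (gmul t t'). split; [apply TM; auto|].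
    assert (ct : gmul t k' = gmul k' t) by exact (proj2 (hZ t Tt) k' Kk').
    rewrite <- !gassoc. f_equal. rewrite gassoc, ct, <- gassoc. reflexivity.
  - intros [t [Tt ->]]. exists (gmul k t), k'. split; [exists t; auto|].
    split; [exists gone; split; [auto| rewrite gmulg1; reflexivity]|].
    assert (ct : gmul t k' = gmul k' t) by exact (proj2 (hZ t Tt) k' Kk').
    rewrite <- !gassoc, ct. reflexivity.
Qed.

Lemma coset_inv k : K k -> setinv G (coset G k T) = coset G (ginv k) T.
Proof.
  destruct hT as [T1 [TM TI]]. destruct hK as [K1 [KM KI]]. intro Kk.
  apply functional_extensionality; intro x; apply propositional_extensionality; split.
  - intros [a [[t [Tt ->]] ->]]. exists (ginv t); split; [apply TI; auto|].
    rewrite inv_mul. exact (proj2 (hZ _ (TI _ Tt)) _ (KI _ Kk)).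
  - intros [t [Tt ->]]. exists (gmul k (ginv t)). split; [exists (ginv t); auto|].
    rewrite inv_mul, inv_inv. symmetry. exact (proj2 (hZ t Tt) _ (KI _ Kk)).
Qed.

Lemma qmul_ok S1 S2 : is_coset G K T S1 -> is_coset G K T S2 ->
  is_coset G K T (setmul G S1 S2).
Proof.
  destruct hK as [K1 [KM KI]].
  intros [k1 [Kk1 ->]] [k2 [Kk2 ->]]. exists (gmul k1 k2).
  split; [apply KM; auto| apply coset_mul; auto].
Qed.

Lemma qinv_ok S : is_coset G K T S -> is_coset G K T (setinv G S).
Proof.
  destruct hK as [K1 [KM KI]].
  intros [k [Kk ->]]. exists (ginv k). split; [apply KI; auto| apply coset_inv; auto].
Qed.

Lemma qone_ok : is_coset G K T (coset G gone T).
Proof. destruct hK as [K1 _]. exists gone; auto. Qed.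

Definition qmul (x y : qcar G K T) : qcar G K T :=
  exist _ (setmul G (proj1_sig x) (proj1_sig y)) (qmul_ok _ _ (proj2_sig x) (proj2_sig y)).
Definition qinv (x : qcar G K T) : qcar G K T :=
  exist _ (setinv G (proj1_sig x)) (qinv_ok _ (proj2_sig x)).
Definition qone : qcar G K T := exist _ (coset G gone T) qone_ok.

Lemma qeq (x y : qcar G K T) : proj1_sig x = proj1_sig y -> x = y.
Proof.
  destruct x as [x px], y as [y py]; simpl; intros ->. f_equal. apply proof_irrelevance.
Qed.

Lemma qassoc x y z : qmul x (qmul y z) = qmul (qmul x y) z.
Proof.
  destruct hK as [K1 [KM KI]].
  destruct x as [A [a [Ka ->]]], y as [B [b [Kb ->]]], z as [C [c [Kc ->]]].
  apply qeq; simpl.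
  rewrite (coset_mul b c Kc), (coset_mul a (gmul b c) (KM _ _ Kb Kc)),
    (coset_mul a b Kb), (coset_mul (gmul a b) c Kc), gassoc.
  reflexivity.
Qed.

Lemma qmul1 x : qmul qone x = x.
Proof.
  destruct x as [A [a [Ka ->]]]. apply qeq; simpl.
  rewrite (coset_mul gone a Ka), gmul1g. reflexivity.
Qed.

Lemma qmulr1 x : qmul x qone = x.
Proof.
  destruct hK as [K1 [KM KI]].
  destruct x as [A [a [Ka ->]]]. apply qeq; simpl.
  rewrite (coset_mul a gone K1), gmulg1. reflexivity.
Qed.

Lemma qmulV x : qmul (qinv x) x = qone.
Proof.
  destruct x as [A [a [Ka ->]]]. apply qeq; simpl.
  rewrite (coset_inv a Ka), (coset_mul (ginv a) a Ka), gmulVg. reflexivity.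
Qed.

Lemma qmulrV x : qmul x (qinv x) = qone.
Proof.
  destruct hK as [K1 [KM KI]].
  destruct x as [A [a [Ka ->]]]. apply qeq; simpl.
  rewrite (coset_inv a Ka), (coset_mul a (ginv a) (KI _ Ka)), gmulgV. reflexivity.
Qed.

Definition quot_group : Group :=
  mkGroup (qcar G K T) qmul qone qinv qassoc qmul1 qmulr1 qmulV qmulrV.

End Quot.


Definition admissible (G : Group) (alpha beta : R) (N : nat) : Prop :=
  forall H, is_subgroup G H -> fg_sub G H ->
    exists K T (hK : is_subgroup G K) (hT : is_subgroup G T)
      (hZ : subset T (center G K)),
      subset K H /\ index_le G K H N /\ torsion_free G T /\
      perfect (quot_group G K T hK hT hZ) alpha beta.

Definition virt_inf_center (G : Group) (H : G -> Prop) : Prop :=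
  exists L, is_subgroup G L /\ subset L H /\ finite_index G L H /\
    ~ finite_pred (center G L).

(* Main.v *)
Require Import Defs.
From Stdlib Require Import Reals Lia List Classical ClassicalEpsilon Arith Lra.
Open Scope R_scope.

Open Scope R_scope.

Lemma sg1 {G : Group} {H : G -> Prop} : is_subgroup G H -> H gone.
Proof. intros [h _]; exact h. Qed.
Lemma sgM {G : Group} {H : G -> Prop} : is_subgroup G H -> forall x y, H x -> H y -> H (gmul x y).
Proof. intros [_ [h _]]; exact h. Qed.
Lemma sgV {G : Group} {H : G -> Prop} : is_subgroup G H -> forall x, H x -> H (ginv x).
Proof. intros [_ [_ h]]; exact h. Qed.

Lemma lcancel {G : Group} (x y : G) : gmul (ginv x) (gmul x y) = y.
Proof. rewrite gassoc, gmulVg, gmul1g; reflexivity. Qed.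
Lemma rcancel {G : Group} (x y : G) : gmul x (gmul (ginv x) y) = y.
Proof. rewrite gassoc, gmulgV, gmul1g; reflexivity. Qed.
Lemma inv_one {G : Group} : ginv (@gone G) = gone.
Proof. rewrite <- (gmul1g (ginv gone)), gmulgV; reflexivity. Qed.

Ltac gsimp := repeat (rewrite ?inv_mul, ?inv_inv, ?inv_one, <- ?gassoc, ?lcancel, ?rcancel,
   ?gmulVg, ?gmulgV, ?gmul1g, ?gmulg1).

Lemma gpow_add {G : Group} (x : G) a b : gpow x (a + b) = gmul (gpow x a) (gpow x b).
Proof. induction a; simpl. - rewrite gmul1g; auto. - rewrite IHa, gassoc; auto. Qed.

Lemma gpow_r {G : Group} (x : G) m : gpow x (S m) = gmul (gpow x m) x.
Proof. replace (S m) with (m + 1)%nat by lia. rewrite gpow_add; simpl; rewrite gmulg1; auto. Qed.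

Lemma gpow_in {G : Group} (H : G -> Prop) (hH : is_subgroup G H) x n : H x -> H (gpow x n).
Proof. intro hx; induction n; simpl; [apply (sg1 hH)| apply (sgM hH); auto]. Qed.

Lemma pow_mul {G : Group} (U : G -> Prop) a b x y :
  pow_set U a x -> pow_set U b y -> pow_set U (a + b) (gmul x y).
Proof.
  revert x; induction a; intros x hx hy; simpl in *.
  - subst x; rewrite gmul1g; auto.
  - destruct hx as [u [x' [hu [hx' ->]]]]. exists u, (gmul x' y); split; auto; split;
     [apply IHa; auto| rewrite gassoc; reflexivity].
Qed.

Lemma pow_gpow1 {G : Group} (U : G -> Prop) u n : U u -> pow_set U n (gpow u n).
Proof. intro hu; induction n; simpl; [reflexivity| exists u, (gpow u n); auto]. Qed.

Lemma pow_gpow {G : Group} (U : G -> Prop) w j n : pow_set U j w -> pow_set U (n * j) (gpow w n).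
Proof. intro hw; induction n; simpl; [reflexivity| apply pow_mul; auto]. Qed.

Lemma pow_in {G : Group} (U L : G -> Prop) (hL : is_subgroup G L) :
  subset U L -> forall n x, pow_set U n x -> L x.
Proof. intros hUL n; induction n; simpl; intros x hx.
 - subst; apply (sg1 hL).
 - destruct hx as [u [y [hu [hy ->]]]]. apply (sgM hL); auto. Qed.

Lemma pow_mono {G : Group} (U U' : G -> Prop) : (forall x, U x -> U' x) ->
  forall n x, pow_set U n x -> pow_set U' n x.
Proof. intros h n; induction n; simpl; intros x hx; auto.
 destruct hx as [u [y [hu [hy ->]]]]. exists u, y; auto. Qed.

Definition lprod {G : Group} (l : list G) : G := fold_right gmul gone l.
Lemma lprod_app {G : Group} (l1 l2 : list G) : lprod (l1 ++ l2) = gmul (lprod l1) (lprod l2).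
Proof. induction l1; simpl; [rewrite gmul1g; auto| rewrite IHl1, gassoc; auto]. Qed.
Lemma pow_list {G : Group} (U : G -> Prop) n x : pow_set U n x ->
  exists l, length l = n /\ (forall y, In y l -> U y) /\ x = lprod l.
Proof. revert x; induction n; simpl; intros x hx.
 - exists nil; simpl; repeat split; auto. intros y [].
 - destruct hx as [u [y [hu [hy ->]]]]. destruct (IHn y hy) as [l [hl [hlU ->]]].
   exists (u :: l); simpl; repeat split; auto. intros z [<-|hz]; auto. Qed.
Lemma list_pow {G : Group} (U : G -> Prop) l : (forall y, In y l -> U y) -> pow_set U (length l) (lprod l).
Proof. induction l; simpl; intros h; auto. exists a, (lprod l); repeat split; auto. Qed.

Lemma nodup_map_seq {A : Type} (g : nat -> A) m : forall a,
  (forall i j, (a <= i)%nat -> (i < j)%nat -> (j < a + m)%nat -> g i <> g j) -> NoDup (map g (seq a m)).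
Proof. induction m; intros a h; simpl. constructor.
 constructor.
 - intro hin. apply in_map_iff in hin. destruct hin as [j [hj hin]]. apply in_seq in hin.
   exact (h a j ltac:(lia) ltac:(lia) ltac:(lia) (eq_sym hj)).
 - apply IHm; intros; apply h; lia.
Qed.

Lemma pigeon {A : Type} (g : nat -> A) (l : list A) m : (forall i, (i < m)%nat -> In (g i) l) ->
  (length l < m)%nat -> exists i j, (i < j)%nat /\ (j < m)%nat /\ g i = g j.
Proof. intros hin hlen. apply NNPP; intro hno.
 assert (hnd : NoDup (map g (seq 0 m))).
 { apply nodup_map_seq. intros i j _ hij hj e. apply hno. exists i, j; simpl in hj; auto. }
 assert (hincl : incl (map g (seq 0 m)) l).
 { intros y hy. apply in_map_iff in hy. destruct hy as [i [<- hi]]. apply in_seq in hi. apply hin; lia. }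
 pose proof (NoDup_incl_length hnd hincl) as H. rewrite length_map, length_seq in H. lia.
Qed.

Lemma phc {G : Group} (K L : G -> Prop) n0 (hK : is_subgroup G K) (hi : index_le G K L n0) (f : nat -> G) :
  (forall i, (i <= n0)%nat -> L (f i)) -> exists i j, (i < j)%nat /\ (j <= n0)%nat /\ K (gmul (ginv (f i)) (f j)).
Proof.
  intro hf. destruct hi as [l [hl [_ hcov]]].
  set (r := fun i => epsilon (inhabits (@gone G)) (fun x => In x l /\ K (gmul (ginv x) (f i)))).
  assert (hr : forall i, (i <= n0)%nat -> In (r i) l /\ K (gmul (ginv (r i)) (f i))).
  { intros i hi. unfold r. apply epsilon_spec. destruct (hcov (f i) (hf i hi)) as [x [hx1 hx2]]. exists x; auto. }
  destruct (pigeon r l (S n0)) as [i [j [hij [hj e]]]].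
  - intros i hi; apply hr; lia.
  - lia.
  - exists i, j; split; [lia| split; [lia|]].
    destruct (hr i ltac:(lia)) as [_ h1]. destruct (hr j ltac:(lia)) as [_ h2].
    rewrite e in h1.
    assert (E : gmul (ginv (f i)) (f j) = gmul (ginv (gmul (ginv (r j)) (f i))) (gmul (ginv (r j)) (f j))).
    { gsimp. reflexivity. }
    rewrite E. apply (sgM hK); [apply (sgV hK)|]; auto.
Qed.

Open Scope R_scope.

Definition cov {T : Type} (A : T -> Prop) (b : nat) : Prop :=
  exists l : list T, (length l <= b)%nat /\ forall x, A x -> In x l.

Lemma cov_mono {T} (A B : T -> Prop) b b' : (forall x, A x -> B x) -> cov B b -> (b <= b')%nat -> cov A b'.
Proof. intros h [l [hl hin]] hb. exists l; split; [lia| auto]. Qed.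

Lemma card_cov {T} (A : T -> Prop) n : card_is A n -> cov A n.
Proof. intros [l [_ [h e]]]. exists l; split; [lia| intros x hx; apply h; auto]. Qed.

Lemma card_le {T} (A : T -> Prop) n b : card_is A n -> cov A b -> (n <= b)%nat.
Proof. intros [l [hnd [h e]]] [l' [hl' hin]].
  assert (incl l l') by (intros x hx; apply hin, h; auto).
  pose proof (NoDup_incl_length hnd H). lia. Qed.

Lemma cov_card {T} (A : T -> Prop) b : cov A b -> exists n, card_is A n /\ (n <= b)%nat.
Proof. intros [l [hl hin]].
  set (dec := fun x y : T => excluded_middle_informative (x = y)).
  set (l1 := filter (fun x => if excluded_middle_informative (A x) then true else false) l).
  set (l2 := nodup dec l1).
  assert (hi : forall x, In x l2 <-> A x).
  { intro x. unfold l2, l1. rewrite nodup_In, filter_In. split.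
    - intros [_ h]. destruct (excluded_middle_informative (A x)); auto; discriminate.
    - intro h; split; auto. destruct (excluded_middle_informative (A x)); auto. }
  assert (hnd : NoDup l2) by apply NoDup_nodup.
  exists (length l2); split.
  - exists l2; auto.
  - assert (incl l2 l) by (intros x hx; apply hin, hi; auto).
    pose proof (NoDup_incl_length hnd H); lia.
Qed.

Lemma cov_finite {T} (A : T -> Prop) b : cov A b -> finite_pred A.
Proof. intro h; destruct (cov_card A b h) as [n [hn _]]; exists n; auto. Qed.

Lemma cov_image {T T'} (A : T -> Prop) (B : T' -> Prop) (f : T -> T') b : cov A b ->
  (forall y, B y -> exists x, A x /\ y = f x) -> cov B b.
Proof. intros [l [hl hin]] h. exists (map f l); split; [rewrite length_map; auto|].
  intros y hy. destruct (h y hy) as [x [hx ->]]. apply in_map; auto. Qed.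

Lemma flat_map_len {A B} (f : A -> list B) (l : list A) c :
  (forall a, In a l -> (length (f a) <= c)%nat) -> (length (flat_map f l) <= length l * c)%nat.
Proof. induction l; simpl; intros h; auto. rewrite length_app.
  pose proof (h a (or_introl eq_refl)). assert (length (flat_map f l) <= length l * c)%nat by (apply IHl; auto). lia. Qed.

Lemma cov_prod {G : Group} (A B C : G -> Prop) p q : cov A p -> cov B q ->
  (forall x, C x -> exists a b, A a /\ B b /\ x = gmul a b) -> cov C (p * q).
Proof. intros [la [hla ina]] [lb [hlb inb]] h.
  exists (flat_map (fun a => map (gmul a) lb) la). split.
  - eapply Nat.le_trans; [apply flat_map_len with (c := q)|].
    + intros a _; rewrite length_map; auto.
    + apply Nat.mul_le_mono_r; auto.
  - intros x hx. destruct (h x hx) as [a [b [hA [hB ->]]]]. apply in_flat_map. exists a; split; auto.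
    apply in_map; auto.
Qed.

Lemma cov_union_list {T I} (A : I -> T -> Prop) (l : list I) c : (forall i, In i l -> cov (A i) c) ->
  forall (C : T -> Prop), (forall x, C x -> exists i, In i l /\ A i x) -> cov C (length l * c).
Proof. induction l; simpl; intros hc C hC.
  - exists nil; split; auto. intros x hx; destruct (hC x hx) as [i [[] _]].
  - destruct (hc a (or_introl eq_refl)) as [la [hla ina]].
    destruct (IHl (fun i hi => hc i (or_intror hi)) (fun x => exists i, In i l /\ A i x) (fun x hx => hx))
      as [lr [hlr inr]].
    exists (la ++ lr); split; [rewrite length_app; lia|].
    intros x hx. apply in_or_app. destruct (hC x hx) as [i [[<-|hi] hA]]; [left; auto| right; apply inr; eauto].
Qed.

Lemma cov_union_nat {T} (A : nat -> T -> Prop) (C : T -> Prop) n c : (forall i, (i < n)%nat -> cov (A i) c) ->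
  (forall x, C x -> exists i, (i < n)%nat /\ A i x) -> cov C (n * c).
Proof. intros hc hC. rewrite <- (length_seq n 0). apply (cov_union_list A).
  - intros i hi; apply in_seq in hi; apply hc; lia.
  - intros x hx; destruct (hC x hx) as [i [hi hA]]; exists i; split; auto; apply in_seq; lia.
Qed.

Lemma cov_pow {G : Group} (A : G -> Prop) p : cov A p -> forall n, cov (pow_set A n) (p ^ n).
Proof. intros h n; induction n; simpl.
  - exists (gone :: nil); split; [simpl; auto| intros x ->; left; auto].
  - apply (cov_prod A (pow_set A n)); auto. Qed.

Lemma pow_split {G : Group} (A B : G -> Prop) : (forall b a y, B b -> pow_set A a y -> gmul b y = gmul y b) ->
  forall n x, pow_set (fun z => A z \/ B z) n x ->
  exists a c y z, (a + c = n)%nat /\ pow_set A a y /\ pow_set B c z /\ x = gmul y z.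
Proof. intros hcomm n; induction n; simpl; intros x hx.
 - exists 0%nat, 0%nat, gone, gone; simpl; repeat split; auto. subst; rewrite gmul1g; auto.
 - destruct hx as [w [x' [hw [hx' ->]]]]. destruct (IHn x' hx') as [a [c [y [z [hac [hy [hz ->]]]]]]].
   destruct hw as [hw|hw].
   + exists (S a), c, (gmul w y), z. split; [lia|]. split; [simpl; exists w, y; auto|]. split; auto.
     apply gassoc.
   + exists a, (S c), y, (gmul w z). split; [lia|]. split; auto. split; [simpl; exists w, z; auto|].
     rewrite gassoc, (hcomm w a y hw hy), <- gassoc. reflexivity.
Qed.

Lemma cov_split {G : Group} (A B : G -> Prop) n ca cb : (forall b a y, B b -> pow_set A a y -> gmul b y = gmul y b) ->
  (forall a, (a <= n)%nat -> cov (pow_set A a) ca) -> (forall c, (c <= n)%nat -> cov (pow_set B c) cb) ->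
  cov (pow_set (fun z => A z \/ B z) n) (S n * (ca * cb)).
Proof. intros hc ha hb.
  apply (cov_union_nat (fun a x => exists y z, pow_set A a y /\ pow_set B (n - a) z /\ x = gmul y z)).
  - intros a ha'. apply (cov_prod (pow_set A a) (pow_set B (n - a))); [apply ha; lia| apply hb; lia| auto].
  - intros x hx. destruct (pow_split A B hc n x hx) as [a [c [y [z [e [hy [hz ->]]]]]]].
    exists a; split; [lia|]. exists y, z; split; auto. replace (n - a)%nat with c by lia. auto.
Qed.

Open Scope R_scope.
Open Scope nat_scope.

Lemma gen_sub {G : Group} (U : G -> Prop) : is_subgroup G (gen G U).
Proof. split; [|split].
  - intros L hL _. apply (sg1 hL).
  - intros x y hx hy L hL hU. apply (sgM hL); [apply hx| apply hy]; auto.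
  - intros x hx L hL hU; apply (sgV hL); apply hx; auto. Qed.
Lemma gen_incl {G : Group} (U : G -> Prop) : subset U (gen G U).
Proof. intros x hx L hL hU; auto. Qed.
Lemma gen_min {G : Group} (U L : G -> Prop) : is_subgroup G L -> subset U L -> subset (gen G U) L.
Proof. intros hL hU x hx; apply hx; auto. Qed.

Definition schV {G : Group} (U K : G -> Prop) k : G -> Prop :=
  fun x => K x /\ exists j, (1 <= j <= k)%nat /\ pow_set U j x.

Lemma schreier {G : Group} (U L K : G -> Prop) n0 :
  is_subgroup G L -> generates G U L -> is_subgroup G K -> subset K L ->
  index_le G K L n0 -> (1 <= n0)%nat ->
  generates G (schV U K (n0 * n0)) K.
Proof.
  intros hL hgen hK hKL hidx hn0.
  set (k := (n0 * n0)%nat).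
  set (V := schV U K k).
  set (Sg := gen G V).
  assert (hS : is_subgroup G Sg) by apply gen_sub.
  assert (hSK : subset Sg K) by (apply gen_min; [auto| intros x [hx _]; auto]).
  assert (hUL : subset U L) by (intros x hx; apply (proj1 (hgen x)); exact (gen_incl U x hx)).
  assert (hPL : forall j x, pow_set U j x -> L x) by (intros; eapply pow_in; eauto).
  assert (inS : forall j y, (j <= k)%nat -> K y -> pow_set U j y -> Sg y).
  { intros j y hj hy hp. destruct j as [|j].
    - simpl in hp; subst; apply (sg1 hS).
    - apply (gen_incl V). split; auto. exists (S j); split; [lia| auto]. }
  assert (KS : forall j w i x, (j < n0)%nat -> (i < 2 * n0)%nat -> pow_set U j w -> pow_set U i x ->
             K (gmul (ginv w) x) -> Sg (gmul (ginv w) x)).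
  { intros j w i x hj hi hw hx hwx.
    destruct (phc K L n0 hK hidx (fun t => gpow w t)) as [a [b [hab [hb hk]]]].
    { intros t _. apply (gpow_in L hL). eapply hPL; eauto. }
    set (D := (b - a)%nat).
    assert (hDle : (1 <= D <= n0)%nat) by (unfold D; lia).
    assert (hD : gpow w b = gmul (gpow w a) (gpow w D)) by (rewrite <- gpow_add; f_equal; lia).
    simpl in hk. rewrite hD, lcancel in hk.
    set (c := gpow w (D - 1)).
    assert (hcw : gmul c w = gpow w D).
    { unfold c. rewrite <- gpow_r. f_equal. lia. }
    assert (hScw : Sg (gmul c w)).
    { rewrite hcw. apply (inS (D * j)%nat); [unfold k; nia | auto | apply pow_gpow; auto]. }
    assert (hKcx : K (gmul c x)).
    { replace (gmul c x) with (gmul (gmul c w) (gmul (ginv w) x)) by (gsimp; reflexivity).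
      apply (sgM hK); [rewrite hcw|]; auto. }
    assert (hScx : Sg (gmul c x)).
    { apply (inS ((D - 1) * j + i)%nat); [unfold k; nia| auto | apply pow_mul; auto; apply pow_gpow; auto]. }
    replace (gmul (ginv w) x) with (gmul (ginv (gmul c w)) (gmul c x)) by (gsimp; reflexivity).
    apply (sgM hS); [apply (sgV hS)|]; auto. }
  set (Y := fun g => exists j w, (j < n0)%nat /\ pow_set U j w /\ Sg (gmul (ginv w) g)).
  assert (hY1 : Y gone).
  { exists 0%nat, gone; split; [lia| split; [reflexivity|]]. rewrite inv_one, gmul1g; apply (sg1 hS). }
  assert (short : forall x, pow_set U n0 x -> Y x).
  { intros x hx. destruct (pow_list U n0 x hx) as [l [hl [hlU ->]]].
    assert (hsk : forall t y, In y (skipn t l) -> U y).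
    { intros t y hy. apply hlU. rewrite <- (firstn_skipn t l). apply in_or_app; right; auto. }
    assert (hfk : forall t y, In y (firstn t l) -> U y).
    { intros t y hy. apply hlU. rewrite <- (firstn_skipn t l). apply in_or_app; left; auto. }
    destruct (phc K L n0 hK hidx (fun t => lprod (skipn t l))) as [a [b [hab [hb hk]]]].
    { intros t _. apply (hPL (length (skipn t l))). apply list_pow. apply hsk. }
    simpl in hk.
    exists (a + (n0 - b))%nat, (gmul (lprod (firstn a l)) (lprod (skipn b l))).
    assert (hw : pow_set U (a + (n0 - b)) (gmul (lprod (firstn a l)) (lprod (skipn b l)))).
    { apply pow_mul.
      - replace a with (length (firstn a l)) at 1 by (rewrite length_firstn; lia). apply list_pow; apply hfk.
      - replace (n0 - b)%nat with (length (skipn b l)) at 1 by (rewrite length_skipn; lia). apply list_pow; apply hsk. }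
    split; [lia| split; auto].
    assert (e : lprod l = gmul (lprod (firstn a l)) (lprod (skipn a l))) by
      (rewrite <- lprod_app, firstn_skipn; reflexivity).
    assert (hK' : K (gmul (ginv (gmul (lprod (firstn a l)) (lprod (skipn b l)))) (lprod l))).
    { rewrite e. replace (gmul (ginv (gmul (lprod (firstn a l)) (lprod (skipn b l))))
                  (gmul (lprod (firstn a l)) (lprod (skipn a l)))) with
        (ginv (gmul (ginv (lprod (skipn a l))) (lprod (skipn b l)))) by (gsimp; reflexivity).
      apply (sgV hK); auto. }
    apply (KS (a + (n0 - b))%nat _ n0 (lprod l)); auto; lia. }
  assert (Yu : forall u g, U u -> Y g -> Y (gmul u g)).
  { intros u g hu [j [w [hj [hw hs]]]].
    assert (huw : pow_set U (S j) (gmul u w)) by (exists u, w; auto).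
    destruct (Nat.lt_ge_cases (S j) n0) as [hlt|hge].
    - exists (S j), (gmul u w). split; auto. split; auto. gsimp. auto.
    - assert (e : S j = n0) by lia. rewrite e in huw. destruct (short _ huw) as [j' [w' [hj' [hw' hs']]]].
      exists j', w'. split; auto; split; auto.
      replace (gmul (ginv w') (gmul u g)) with (gmul (gmul (ginv w') (gmul u w)) (gmul (ginv w) g))
        by (gsimp; reflexivity).
      apply (sgM hS); auto. }
  assert (Ypos : forall j x, pow_set U j x -> Y x).
  { intro j; induction j; intros x hx; simpl in hx.
    - subst; auto.
    - destruct hx as [u [y [hu [hy ->]]]]. apply Yu; auto. }
  assert (Yui : forall u g, U u -> Y g -> Y (gmul (ginv u) g)).
  { intros u g hu [j [w [hj [hw hs]]]].
    destruct (phc K L n0 hK hidx (fun t => gmul (gpow u t) w)) as [a [b [hab [hb hk]]]].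
    { intros t _. apply (sgM hL); [apply gpow_in; auto | eapply hPL; eauto]. }
    simpl in hk.
    set (D := (b - a)%nat).
    assert (hD : gpow u b = gmul (gpow u a) (gpow u D)) by (rewrite <- gpow_add; f_equal; lia).
    assert (hk' : K (gmul (ginv w) (gmul (gpow u D) w))).
    { replace (gmul (ginv w) (gmul (gpow u D) w)) with
        (gmul (ginv (gmul (gpow u a) w)) (gmul (gpow u b) w)); auto. rewrite hD. gsimp. reflexivity. }
    assert (hsD : Sg (gmul (ginv w) (gmul (gpow u D) w))).
    { apply (KS j w (D + j) _); auto; [lia| apply pow_mul; auto; apply pow_gpow1; auto]. }
    assert (hYe : Y (gmul (gpow u (D - 1)) w)).
    { apply (Ypos (D - 1 + j)%nat). apply pow_mul; [apply pow_gpow1|]; auto. }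
    destruct hYe as [j' [w' [hj' [hw' hs']]]].
    exists j', w'. split; auto; split; auto.
    assert (hD1 : gpow u D = gmul u (gpow u (D - 1))) by (replace D with (S (D - 1)) at 1 by lia; reflexivity).
    replace (gmul (ginv w') (gmul (ginv u) g)) with
      (gmul (gmul (gmul (ginv w') (gmul (gpow u (D - 1)) w)) (ginv (gmul (ginv w) (gmul (gpow u D) w))))
            (gmul (ginv w) g)).
    - apply (sgM hS); [apply (sgM hS); [auto| apply (sgV hS); auto]| auto].
    - rewrite hD1. gsimp. reflexivity. }
  set (Zs := fun x => forall y, Y y <-> Y (gmul x y)).
  assert (hZs : is_subgroup G Zs).
  { split; [|split].
    - intros y; rewrite gmul1g; tauto.
    - intros x1 x2 h1 h2 y. rewrite <- gassoc.
      split; intro hy; [apply (proj1 (h1 _)), (proj1 (h2 _)); auto | apply (proj2 (h2 _)), (proj2 (h1 _)); auto].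
    - intros x h y. pose proof (h (gmul (ginv x) y)) as hh; rewrite rcancel in hh; tauto. }
  assert (hUZ : subset U Zs).
  { intros u hu y; split; [apply Yu; auto| intro h; pose proof (Yui u _ hu h) as h'; rewrite lcancel in h'; auto]. }
  assert (hLZ : forall x, L x -> Zs x).
  { intros x hx. apply (proj2 (hgen x) hx); auto. }
  intro x; split; [apply hSK|]. intro hx.
  assert (hYx : Y x).
  { pose proof (proj1 (hLZ x (hKL x hx) gone) hY1) as h; rewrite gmulg1 in h; auto. }
  destruct hYx as [j [w [hj [hw hs]]]].
  assert (hKw : K w).
  { replace w with (gmul x (ginv (gmul (ginv w) x))) by (gsimp; reflexivity).
    apply (sgM hK); [auto| apply (sgV hK); apply hSK; auto]. }
  assert (hSw : Sg w) by (apply (inS j); [unfold k; nia| auto | auto]).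
  replace x with (gmul w (gmul (ginv w) x)) by (apply rcancel). apply (sgM hS); auto.
Qed.

Open Scope R_scope.

Definition phi (G : Group) (K T : G -> Prop) (hK : is_subgroup G K) (g : G) : qcar G K T :=
  match excluded_middle_informative (K g) with
  | left Kg => exist (is_coset G K T) (coset G g T) (ex_intro (fun k => K k /\ coset G g T = coset G k T) g (conj Kg eq_refl))
  | right _ => qone G K T hK
  end.

Lemma phi_val (G : Group) K T hK g : K g -> proj1_sig (phi G K T hK g) = coset G g T.
Proof. intro h. unfold phi. destruct (excluded_middle_informative (K g)); [reflexivity| contradiction]. Qed.

Lemma quot_growth (G : Group) K T hK hT hZ (triv : forall t, T t -> t = gone) (V : G -> Prop) alpha beta :
  perfect (quot_group G K T hK hT hZ) alpha beta -> subset V K -> generates G V K ->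
  forall v, card_is V v -> forall m c, (1 <= m)%nat -> card_is (pow_set V m) c ->
  rpow (alpha * INR v) (beta * INR m) <= INR c.
Proof.
  intros hperf hVK hgen v hv m c hm hc.
  set (Q := quot_group G K T hK hT hZ).
  set (ph := phi G K T hK).
  assert (pmul : forall a b, K a -> K b -> qmul G K T hK hT hZ (ph a) (ph b) = ph (gmul a b)).
  { intros a b ha hb. apply qeq. simpl. unfold ph. rewrite !phi_val; auto; [|apply (sgM hK); auto].
    apply (coset_mul G K T hT hZ); auto. }
  assert (pone : ph gone = qone G K T hK).
  { apply qeq. unfold ph. rewrite phi_val; [reflexivity| apply (sg1 hK)]. }
  assert (pinv : forall a, K a -> qinv G K T hK hT hZ (ph a) = ph (ginv a)).
  { intros a ha. apply qeq. simpl. unfold ph. rewrite !phi_val; auto; [|apply (sgV hK); auto].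
    apply (coset_inv G K T hK hT hZ); auto. }
  assert (pinj : forall a b, K a -> K b -> ph a = ph b -> a = b).
  { intros a b ha hb e. assert (e' : proj1_sig (ph a) = proj1_sig (ph b)) by (rewrite e; auto).
    unfold ph in e'. rewrite !phi_val in e'; auto.
    assert (hca : coset G a T a) by (exists gone; split; [apply (sg1 hT)| rewrite gmulg1; auto]).
    rewrite e' in hca. destruct hca as [t [ht ->]]. rewrite (triv t ht), gmulg1; auto. }
  assert (psurj : forall S : qcar G K T, exists g, K g /\ S = ph g).
  { intros [S [k [hk ->]]]. exists k; split; auto. apply qeq. unfold ph; rewrite phi_val; auto. }
  set (V' := fun S : gcar Q => exists y, V y /\ S = ph y).
  assert (img : forall (A : G -> Prop) n, subset A K -> card_is A n ->
            card_is (fun S : gcar Q => exists y, A y /\ S = ph y) n).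
  { intros A n hAK [l [hnd [hin hl]]]. exists (map ph l). split; [|split].
    - apply NoDup_map_NoDup_ForallPairs; auto. intros a b ha hb e. apply pinj; auto; apply hAK, hin; auto.
    - intro S. split.
      + intro hS. apply in_map_iff in hS. destruct hS as [y [<- hy]]. exists y; split; auto. apply hin; auto.
      + intros [y [hy ->]]. apply in_map. apply hin; auto.
    - rewrite length_map; auto. }
  assert (hPK : forall j y, pow_set V j y -> K y) by (intros; eapply pow_in; eauto).
  assert (piff : forall j (S : gcar Q), pow_set V' j S <-> exists y, pow_set V j y /\ S = ph y).
  { intro j; induction j; intro S; simpl.
    - split.
      + intros ->. exists gone; split; auto.
      + intros [y [-> ->]]. auto.
    - split.
      + intros [u [y [[u0 [hu0 ->]] [hy ->]]]]. destruct (proj1 (IHj y) hy) as [y0 [hy0 ->]].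
        exists (gmul u0 y0); split; [exists u0, y0; auto|]. apply pmul; [apply hVK| eapply hPK]; eauto.
      + intros [y [[u [y0 [hu [hy0 ->]]]] ->]]. exists (ph u), (ph y0). split; [exists u; auto|].
        split; [apply IHj; exists y0; auto|]. symmetry; apply pmul; [apply hVK| eapply hPK]; eauto. }
  destruct hperf as [_ hp].
  assert (hV' : card_is V' v) by (apply img; auto).
  assert (hgen' : generates Q V' (fun _ => True)).
  { intro S; split; auto. intros _. destruct (psurj S) as [g [hg ->]].
    intros Lq hLq hVL.
    assert (hpre : is_subgroup G (fun h => K h /\ Lq (ph h))).
    { split; [|split].
      - split; [apply (sg1 hK)| rewrite pone; apply (sg1 hLq)].
      - intros x y [hx1 hx2] [hy1 hy2]. split; [apply (sgM hK); auto|]. rewrite <- pmul; auto.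
        apply (sgM hLq); auto.
      - intros x [hx1 hx2]. split; [apply (sgV hK); auto|]. rewrite <- pinv; auto. apply (sgV hLq); auto. }
    apply (proj2 (hgen g) hg _ hpre). intros x hx; split; [apply hVK; auto| apply hVL; exists x; auto]. }
  assert (hfi : finite_index Q (fun _ => True) (fun _ => True)).
  { exists 1%nat, (gone :: nil). split; [simpl; auto|]. split; [intros; auto|].
    intros h _. exists gone; split; [left; auto| auto]. }
  assert (hsg : is_subgroup Q (fun _ => True)) by (split; [|split]; auto).
  destruct (hp (fun _ => True) hsg (fun _ h => h) hfi V' (ex_intro _ v hV') (fun _ _ => I) hgen') as [_ hg].
  apply (hg v hV' m c hm).
  assert (hc' : card_is (fun S : gcar Q => exists y, pow_set V m y /\ S = ph y) c) by (apply img; auto; intros x hx; eapply hPK; eauto).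
  destruct hc' as [l [hnd [hin hl]]]. exists l; split; auto; split; auto.
  intro S. split; intro h; [apply piff, hin; auto| apply hin, piff; auto].
Qed.

Open Scope R_scope.

Lemma idx_trans (G : Group) (K L H : G -> Prop) n1 n2 : is_subgroup G H -> subset L H ->
  index_le G K L n1 -> index_le G L H n2 -> index_le G K H (n2 * n1).
Proof. intros hH hLH [ly [hly [inly covy]]] [lx [hlx [inlx covx]]].
  exists (flat_map (fun x => map (gmul x) ly) lx). split; [|split].
  - eapply Nat.le_trans; [apply flat_map_len with (c := n1)|].
    + intros a _; rewrite length_map; auto.
    + apply Nat.mul_le_mono_r; auto.
  - intros z hz. apply in_flat_map in hz. destruct hz as [x [hx hz]]. apply in_map_iff in hz.
    destruct hz as [y [<- hy]]. apply (sgM hH); auto.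
  - intros h hh. destruct (covx h hh) as [x [hx hxh]]. destruct (covy _ hxh) as [y [hy hyh]].
    exists (gmul x y). split; [apply in_flat_map; exists x; split; auto; apply in_map; auto|].
    replace (gmul (ginv (gmul x y)) h) with (gmul (ginv y) (gmul (ginv x) h)) by (gsimp; reflexivity). auto.
Qed.

Lemma triv_T (G : Group) (T : G -> Prop) : is_subgroup G T -> torsion_free G T -> finite_pred T ->
  forall t, T t -> t = gone.
Proof. intros hT htf [n [l [hnd [hin hl]]]] t ht.
  destruct (pigeon (gpow t) l (S n)) as [i [j [hij [hj e]]]].
  - intros i _. apply hin. apply gpow_in; auto.
  - lia.
  - apply (htf t ht (j - i)%nat); [lia|].
    assert (E : gpow t j = gmul (gpow t i) (gpow t (j - i))) by (rewrite <- gpow_add; f_equal; lia).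
    rewrite E in e. 
    assert (E2 : gmul (ginv (gpow t i)) (gpow t i) = gmul (ginv (gpow t i)) (gmul (gpow t i) (gpow t (j - i))))
      by (rewrite <- e; reflexivity).
    rewrite lcancel, gmulVg in E2. auto.
Qed.

Lemma shift (G : Group) (U : G -> Prop) u0 n j c : U u0 -> (j <= n)%nat -> cov (pow_set U n) c -> cov (pow_set U j) c.
Proof. intros hu hj hc. apply (cov_image (pow_set U n) _ (gmul (ginv (gpow u0 (n - j)))) c hc).
  intros y hy. exists (gmul (gpow u0 (n - j)) y). split; [|rewrite lcancel; auto].
  replace n with (n - j + j)%nat at 1 by lia. apply pow_mul; auto. apply pow_gpow1; auto. Qed.

Lemma pow_ball (G : Group) (U V : G -> Prop) k : (forall x, V x -> exists j, (j <= k)%nat /\ pow_set U j x) ->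
  forall m x, pow_set V m x -> exists j, (j <= k * m)%nat /\ pow_set U j x.
Proof. intros hV m; induction m; simpl; intros x hx.
  - exists 0%nat; split; [lia| simpl; auto].
  - destruct hx as [u [y [hu [hy ->]]]]. destruct (hV u hu) as [j1 [hj1 h1]]. destruct (IHm y hy) as [j2 [hj2 h2]].
    exists (j1 + j2)%nat; split; [nia| apply pow_mul; auto]. Qed.

Lemma pow1 (G : Group) (U : G -> Prop) x : U x -> pow_set U 1 x.
Proof. intro h; exists x, gone; simpl; repeat split; auto. rewrite gmulg1; auto. Qed.

Lemma coreA (G : Group) alpha beta N (hadm : admissible G alpha beta N) (H : G -> Prop) (hH : is_subgroup G H)
  (hnv : ~ virt_inf_center G H) (L : G -> Prop) (hL : is_subgroup G L) (hLH : subset L H)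
  (hLi : finite_index G L H) (U : G -> Prop) (hUf : finite_pred U) (hUL : subset U L) (hgen : generates G U L) :
  exists v, forall cu, card_is U cu -> (cu <= S N * v)%nat /\
    forall n c, card_is (pow_set U n) c -> (1 <= n)%nat -> (1 <= cu)%nat -> (cu <= c)%nat /\
    forall m, (1 <= m)%nat -> (S N * S N * m <= n)%nat ->
      rpow (alpha * INR v) (beta * INR m) <= INR ((S N * S N * m + 1) * c).
Proof.
  destruct (hadm L hL (ex_intro _ U (conj hUf (conj hUL hgen))))
    as [K [T [hK [hT [hZ [hKL [hidx [htf hperf]]]]]]]].
  assert (hKH : finite_index G K H).
  { destruct hLi as [N2 hLi]. exists (N2 * N)%nat. apply (idx_trans G K L H); auto. }
  assert (hZf : finite_pred (center G K)).
  { apply NNPP; intro hn. apply hnv. exists K; repeat split; auto.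
    - apply (sg1 hK).
    - intros; apply (sgM hK); auto.
    - intros; apply (sgV hK); auto.
    - intros x hx; apply hLH, hKL; auto. }
  assert (hTf : finite_pred T).
  { destruct hZf as [nz hz]. apply (cov_finite T nz). apply (cov_mono T (center G K) nz nz); [exact hZ| apply card_cov; exact hz| lia]. }
  pose proof (triv_T G T hT htf hTf) as triv.
  assert (hidx' : index_le G K L (S N)).
  { destruct hidx as [l [hl r]]. exists l; split; [lia| auto]. }
  set (k := (S N * S N)%nat).
  set (V := schV U K k).
  assert (hgV : generates G V K) by (apply (schreier U L K (S N)); auto; lia).
  assert (hVK : subset V K) by (intros x [hx _]; auto).
  destruct hUf as [cu0 hcu0].
  assert (hcovU : cov U cu0) by (apply card_cov; auto).
  assert (hVcov : cov V (S k * (S cu0) ^ k)).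
  { apply (cov_union_nat (fun j => pow_set U j)).
    - intros i hi. apply (cov_mono _ _ (cu0 ^ i) _ (fun x h => h)); [apply cov_pow; auto|].
      apply Nat.le_trans with (m := ((S cu0) ^ i)%nat); [apply Nat.pow_le_mono_l; lia| apply Nat.pow_le_mono_r; lia].
    - intros x [_ [j [hj hp]]]. exists j; split; [lia| auto]. }
  destruct (cov_card V _ hVcov) as [v [hv _]].
  exists v. intros cu hcu.
  split.
  - pose proof hidx as hidx0. destruct hidx0 as [l [hl [_ hcovl]]].
    assert (hc : cov U (length l * v)).
    { apply (cov_union_list (fun x u => U u /\ K (gmul (ginv x) u)) l v).
      - intros x hx. destruct (classic (exists u1, U u1 /\ K (gmul (ginv x) u1))) as [[u1 [hu1 hxu1]]| hno].
        + destruct (phc K L (S N) hK hidx' (fun t => gpow u1 t)) as [a [b [hab [hb hk]]]].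
          { intros t _. apply (gpow_in L hL); auto. }
          simpl in hk.
          set (D := (b - a)%nat).
          assert (hD : gpow u1 b = gmul (gpow u1 a) (gpow u1 D)) by (rewrite <- gpow_add; f_equal; lia).
          rewrite hD, lcancel in hk.
          assert (hD1 : gpow u1 D = gmul (gpow u1 (D - 1)) u1) by (rewrite <- gpow_r; f_equal; lia).
          apply (cov_image V _ (gmul (ginv (gpow u1 (D - 1)))) v (card_cov V v hv)).
          intros u [hu hxu]. exists (gmul (gpow u1 (D - 1)) u). split; [|rewrite lcancel; auto].
          split.
          * replace (gmul (gpow u1 (D - 1)) u) with
              (gmul (gpow u1 D) (gmul (ginv (gmul (ginv x) u1)) (gmul (ginv x) u))) by (rewrite hD1; gsimp; reflexivity).
            apply (sgM hK); [auto| apply (sgM hK); [apply (sgV hK)|]; auto].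
          * exists (D - 1 + 1)%nat. split; [unfold k; nia|]. apply pow_mul; [apply pow_gpow1| apply pow1]; auto.
        + exists nil; split; [simpl; lia|]. intros u hu; exfalso; apply hno; exists u; auto.
      - intros u hu. destruct (hcovl u (hUL u hu)) as [x [hx hxu]]. exists x; auto. }
    pose proof (card_le U cu _ hcu hc). nia.
  - intros n c hc hn hcu1.
    pose proof hcu as hcu'. destruct hcu' as [lu [_ [hinu hlu]]].
    destruct lu as [|u0 lu]; [simpl in hlu; lia|].
    assert (hu0 : U u0) by (apply hinu; left; auto).
    assert (hcc : cov (pow_set U n) c) by (apply card_cov; auto).
    split.
    + apply (card_le U cu c); [exact hcu|].
      apply (cov_mono U (pow_set U 1) c c); [apply pow1| apply (shift G U u0 n 1 c); auto| lia].
    + intros m hm hkm.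
      assert (hcov : cov (pow_set V m) (S (k * m) * c)).
      { apply (cov_union_nat (fun j => pow_set U j)).
        - intros i hi. apply (shift G U u0 n i c); auto. lia.
        - intros x hx. destruct (pow_ball G U V k (fun x hx => match hx with conj _ (ex_intro _ j (conj hj hp)) => ex_intro _ j (conj (proj2 hj) hp) end) m x hx) as [j [hj hp]].
          exists j; split; [lia| auto]. }
      destruct (cov_card _ _ hcov) as [cvm [hcvm hle]].
      eapply Rle_trans; [apply (quot_growth G K T hK hT hZ triv V alpha beta hperf hVK hgV v hv m cvm hm hcvm)|].
      apply le_INR. replace (k * m + 1)%nat with (S (k * m)) by lia. auto.
Qed.

Open Scope R_scope.

Lemma inf_list {T} (A : T -> Prop) : ~ finite_pred A -> forall m, exists l, NoDup l /\ length l = m /\ forall x, In x l -> A x.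
Proof. intros hinf m; induction m.
  - exists nil; split; [constructor| split; [reflexivity| intros x []]].
  - destruct IHm as [l [hnd [hl hin]]].
    destruct (classic (exists x, A x /\ ~ In x l)) as [[x [hx hnx]]|hno].
    + exists (x :: l); split; [constructor; auto| split; [simpl; lia|]]. intros y [<-|hy]; auto.
    + exfalso; apply hinf. exists m, l; split; auto; split; auto. intro x; split; auto.
      intro hx. apply NNPP; intro hn; apply hno; exists x; auto.
Qed.

Lemma sq_lt_pow2 q : (5 <= q)%nat -> (q * q < 2 ^ q)%nat.
Proof. intro h; induction h; simpl; [lia|]. rewrite Nat.add_0_r. nia. Qed.

Lemma find_n M : exists n, (1 <= n)%nat /\ (S n ^ M < 4 ^ n)%nat.
Proof.
  set (q := (M + 5)%nat). exists (2 ^ (q - 1))%nat.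
  assert (hq : (2 ^ q = 2 * 2 ^ (q - 1))%nat) by (replace q with (S (q - 1)) at 1 by lia; reflexivity).
  assert (h1 : (1 <= 2 ^ (q - 1))%nat) by (apply Nat.le_trans with (m := (2 ^ 0)%nat); [simpl; lia| apply Nat.pow_le_mono_r; lia]).
  split; auto.
  apply Nat.le_lt_trans with (m := ((2 ^ q) ^ M)%nat).
  - apply Nat.pow_le_mono_l. lia.
  - rewrite <- Nat.pow_mul_r. replace 4%nat with (2 ^ 2)%nat by reflexivity. rewrite <- Nat.pow_mul_r.
    apply Nat.pow_lt_mono_r; [lia|]. pose proof (sq_lt_pow2 q ltac:(unfold q; lia)). unfold q in *. nia.
Qed.

Lemma Fcount (G : Group) (L : G -> Prop) (hL : is_subgroup G L) : forall fl, (forall x, In x fl -> center G L x) ->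
  forall i, cov (pow_set (fun x => In x fl) i) (S i ^ length fl).
Proof. induction fl as [|z fl IH]; intros hc i; simpl.
  - apply (cov_mono _ (pow_set (fun x : G => False) i) (0 ^ i)); [intros x hx; exact hx| apply (cov_pow (fun x : G => False) 0); exists nil; split; [simpl; lia| intros x []]|].
    destruct i; simpl; lia.
  - apply (cov_mono _ (pow_set (fun x => (fun y => z = y) x \/ (fun y => In y fl) x) i) (S i * (1 * S i ^ length fl))).
    + intros x hx; exact hx.
    + apply cov_split.
      * intros b a y hb hy. apply (proj2 (hc b (or_intror hb))). apply (pow_in (fun y => z = y) L hL) with (n := a); [|exact hy].
        intros w <-. apply (proj1 (hc z (or_introl eq_refl))).
      * intros a _. replace 1%nat with (1 ^ a)%nat by apply Nat.pow_1_l. apply (cov_pow (fun y => z = y) 1). exists (z :: nil); split; [simpl; lia| intros x <-; left; auto].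
      * intros c hci. apply (cov_mono _ _ (S c ^ length fl) _ (fun x h => h)); [apply IH; intros; apply hc; right; auto|].
        apply Nat.pow_le_mono_l; lia.
    + lia.
Qed.

Lemma rpow_pos a x : 0 < a -> rpow a x = Rpower a x.
Proof. intro h; unfold rpow; destruct (Rle_dec a 0); [lra| reflexivity]. Qed.

Lemma coreB (G : Group) (H : G -> Prop) (hH : is_subgroup G H) (hfg : fg_sub G H) (hv : virt_inf_center G H)
  alpha' beta' (ha : 0 < alpha') (hb : 0 < beta') : ~ perfect_sub G H alpha' beta'.
Proof.
  intros [_ hp]. destruct hv as [L [hL [hLH [[N0 hidx] hinf]]]].
  destruct hfg as [U0 [[cu0 hU0f] [hU0H hgen0]]].
  set (V0 := schV U0 L (S N0 * S N0)).
  assert (hidx' : index_le G L H (S N0)) by (destruct hidx as [l [hl r]]; exists l; split; [lia| auto]).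
  assert (hgV : generates G V0 L) by (apply (schreier U0 H L (S N0)); auto; lia).
  assert (hV0L : subset V0 L) by (intros x [hx _]; auto).
  assert (hVcov : cov V0 (S (S N0 * S N0) * (S cu0) ^ (S N0 * S N0))).
  { apply (cov_union_nat (fun j => pow_set U0 j)).
    - intros i hi. apply (cov_mono _ _ (cu0 ^ i) _ (fun x h => h)); [apply cov_pow; apply card_cov; auto|].
      apply Nat.le_trans with (m := ((S cu0) ^ i)%nat); [apply Nat.pow_le_mono_l; lia| apply Nat.pow_le_mono_r; lia].
    - intros x [_ [j [hj hp']]]. exists j; split; [lia| auto]. }
  destruct (cov_card V0 _ hVcov) as [b [hbV _]].
  set (B := S b).
  assert (hBpos : 0 < INR B) by (apply lt_0_INR; unfold B; lia).
  set (r := Rpower (4 * INR B) (1 / beta') / alpha').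
  destruct (INR_archimed 1 r ltac:(lra)) as [m0 hm0].
  set (m := S m0).
  assert (hm : r <= INR m) by (unfold m; rewrite S_INR; lra).
  destruct (inf_list _ hinf m) as [fl [hnd [hlen hfl]]].
  set (U := fun x => V0 x \/ In x fl).
  assert (hUL : subset U L) by (intros x [hx|hx]; [auto| apply hfl; auto]).
  assert (hUcov : cov U (b + m)).
  { destruct hbV as [lv [_ [hlv elv]]]. exists (lv ++ fl). split; [rewrite length_app; lia|].
    intros x [hx|hx]; apply in_or_app; [left; apply hlv; auto| right; auto]. }
  destruct (cov_card U _ hUcov) as [cu [hcu _]].
  assert (hmcu : (m <= cu)%nat).
  { destruct hcu as [lu [_ [hlu elu]]]. rewrite <- hlen, <- elu. apply NoDup_incl_length; auto.
    intros x hx; apply hlu; right; auto. }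
  assert (hgU : generates G U L).
  { intro x; split.
    - intro hx. apply (gen_min U L hL hUL); auto.
    - intros hx L' hL' hUL'. apply (proj2 (hgV x) hx); auto. intros y hy; apply hUL'; left; auto. }
  assert (hLi : finite_index G L H) by (exists N0; auto).
  destruct (hp L hL hLH hLi U (ex_intro _ cu hcu) hUL hgU) as [_ hg].
  destruct (find_n (S m)) as [n [hn1 hn]].
  assert (hcov : cov (pow_set U n) (S n * (B ^ n * S n ^ m))).
  { apply cov_split.
    - intros z a y hz hy. apply (proj2 (hfl z hz)). apply (pow_in V0 L hL hV0L a y hy).
    - intros a ha'. apply (cov_mono _ _ (b ^ a) _ (fun x h => h)); [apply cov_pow; apply card_cov; auto|].
      apply Nat.le_trans with (m := (B ^ a)%nat); [apply Nat.pow_le_mono_l; unfold B; lia| apply Nat.pow_le_mono_r; unfold B; lia].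
    - intros c hc. rewrite <- hlen. apply (cov_mono _ _ (S c ^ length fl) _ (fun x h => h)); [apply (Fcount G L hL); auto|].
      apply Nat.pow_le_mono_l; lia. }
  destruct (cov_card _ _ hcov) as [c [hc hcle]].
  pose proof (hg cu hcu n c hn1 hc) as hineq.
  assert (hmpos : 0 < INR m) by (apply lt_0_INR; unfold m; lia).
  assert (hrpos : 0 < Rpower (4 * INR B) (1 / beta')) by (unfold Rpower; apply exp_pos).
  assert (hcuR : INR m <= INR cu) by (apply le_INR; auto).
  assert (hx1 : Rpower (4 * INR B) (1 / beta') <= alpha' * INR m).
  { unfold r in hm. apply (Rmult_le_reg_r (/ alpha')); [apply Rinv_0_lt_compat; auto|].
    rewrite Rmult_assoc, Rmult_comm with (r1 := INR m), <- Rmult_assoc, Rinv_r, Rmult_1_l; [lra| lra]. }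
  rewrite rpow_pos in hineq; [|nra].
  assert (h4 : (4 * INR B) ^ n <= INR c).
  { eapply Rle_trans; [|exact hineq].
    rewrite <- Rpower_pow; [|lra].
    apply Rle_trans with (r2 := Rpower (alpha' * INR m) (beta' * INR n)).
    - rewrite <- Rpower_mult. apply Rle_Rpower_l; [apply pos_INR|]. split; [lra|].
      replace (4 * INR B) with (Rpower (Rpower (4 * INR B) (1 / beta')) beta') at 1.
      + apply Rle_Rpower_l; [lra| split; auto].
      + rewrite Rpower_mult. replace (1 / beta' * beta') with 1 by (field; lra). apply Rpower_1; lra.
    - apply Rle_Rpower_l; [apply Rmult_le_pos; [lra| apply pos_INR]|]. split; [nra|].
      apply Rmult_le_compat_l; lra. }
  assert (h5 : INR (4 ^ n * B ^ n) <= INR (S n * (B ^ n * S n ^ m))).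
  { rewrite mult_INR, !pow_INR. eapply Rle_trans; [|apply le_INR; exact hcle].
    rewrite <- Rpow_mult_distr. replace (INR 4) with 4 by (simpl; lra). auto. }
  apply INR_le in h5.
  assert (hBn : (1 <= B ^ n)%nat) by (apply Nat.le_trans with (m := (1 ^ n)%nat); [rewrite Nat.pow_1_l; lia| apply Nat.pow_le_mono_l; unfold B; lia]).
  assert (e : (S n ^ S m = S n * S n ^ m)%nat) by reflexivity. rewrite e in hn.
  set (P := (4 ^ n)%nat) in *. set (Q := (B ^ n)%nat) in *. set (R0 := (S n ^ m)%nat) in *.
  clearbody P Q R0. nia.
Qed.

Open Scope R_scope.
Open Scope R_scope.

Definition kk N := (S N * S N)%nat.
Definition CC beta N := Rpower (2 * INR (kk N)) (1 / beta).
Definition al' alpha beta N := Rmin alpha 1 / (INR (S N) * CC beta N).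
Definition be' beta N := Rmin beta 1 / (2 * INR (kk N)).

Lemma Rpower_1_base y : Rpower 1 y = 1.
Proof. unfold Rpower; rewrite ln_1, Rmult_0_r, exp_0; reflexivity. Qed.

Lemma pow2k k m : (1 <= k)%nat -> (1 <= m)%nat -> (k * m + 1 <= (2 * k) ^ m)%nat.
Proof. intros hk hm; induction hm; [rewrite Nat.pow_1_r; lia|].
  rewrite Nat.pow_succ_r'. set (P := ((2 * k) ^ m)%nat) in *. nia. Qed.

Lemma CC_ge1 beta N : 0 < beta -> 1 <= CC beta N.
Proof. intro hb. unfold CC. rewrite <- (Rpower_O (2 * INR (kk N))) at 1.
  - apply Rle_Rpower. + assert (1 <= INR (kk N)) by (apply (le_INR 1); unfold kk; lia). lra.
    + unfold Rdiv; rewrite Rmult_1_l; left; apply Rinv_0_lt_compat; auto.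
  - assert (1 <= INR (kk N)) by (apply (le_INR 1); unfold kk; lia). lra. Qed.

Lemma realA alpha beta N (ha : 0 < alpha) (hb : 0 < beta) v cu n c :
  (cu <= S N * v)%nat -> (1 <= n)%nat -> (1 <= cu)%nat -> (cu <= c)%nat ->
  (forall m, (1 <= m)%nat -> (kk N * m <= n)%nat -> rpow (alpha * INR v) (beta * INR m) <= INR ((kk N * m + 1) * c)) ->
  rpow (al' alpha beta N * INR cu) (be' beta N * INR n) <= INR c.
Proof.
  intros hcuv hn hcu hcuc hgr.
  set (k := kk N) in *.
  assert (hk1 : (1 <= k)%nat) by (unfold k, kk; lia).
  assert (hkR : 1 <= INR k) by (apply (le_INR 1); auto).
  set (C := CC beta N).
  assert (hC : 1 <= C) by (apply CC_ge1; auto).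
  set (SN := INR (S N)).
  assert (hSN : 1 <= SN) by (apply (le_INR 1); lia).
  assert (hmin1 : Rmin alpha 1 <= 1) by apply Rmin_r.
  assert (hmin2 : Rmin alpha 1 <= alpha) by apply Rmin_l.
  assert (hmin0 : 0 < Rmin alpha 1) by (apply Rmin_glb_lt; lra).
  assert (hbmin1 : Rmin beta 1 <= 1) by apply Rmin_r.
  assert (hbmin2 : Rmin beta 1 <= beta) by apply Rmin_l.
  assert (hbmin0 : 0 < Rmin beta 1) by (apply Rmin_glb_lt; lra).
  assert (hcuR : 1 <= INR cu) by (apply (le_INR 1); auto).
  assert (hcucR : INR cu <= INR c) by (apply le_INR; auto).
  assert (hSNC : 1 <= SN * C) by nra.
  set (x := al' alpha beta N * INR cu).
  assert (hxe : x = Rmin alpha 1 * INR cu * / (SN * C)) by (unfold x, al'; fold C; fold SN; field; lra).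
  assert (hx0 : 0 < x).
  { rewrite hxe. apply Rmult_lt_0_compat; [nra| apply Rinv_0_lt_compat; lra]. }
  assert (hxcu : x <= INR cu).
  { rewrite hxe. apply (Rmult_le_reg_r (SN * C)); [lra|]. rewrite Rmult_assoc, Rinv_l; [|lra]. nra. }
  set (y := be' beta N * INR n).
  assert (hye : y = Rmin beta 1 * INR n / (2 * INR k)) by (unfold y, be'; fold k; field; lra).
  assert (hy0 : 0 <= y).
  { rewrite hye. unfold Rdiv. apply Rmult_le_pos; [apply Rmult_le_pos; [lra| apply pos_INR]| left; apply Rinv_0_lt_compat; lra]. }
  rewrite rpow_pos; auto.
  destruct (Rle_lt_dec x 1) as [hx1|hx1].
  - apply Rle_trans with 1; [|lra]. rewrite <- (Rpower_1_base y). apply Rle_Rpower_l; auto.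
  - set (m := (n / k)%nat).
    destruct (Nat.eq_dec m 0) as [hm0|hm0].
    + assert (hnk : (n < k)%nat) by (apply Nat.div_small_iff; [lia| auto]).
      assert (hy1 : y <= 1).
      { rewrite hye. assert (INR n <= INR k) by (apply le_INR; lia).
        apply (Rmult_le_reg_r (2 * INR k)); [lra|]. unfold Rdiv. rewrite Rmult_assoc, Rinv_l; [|lra]. nra. }
      apply Rle_trans with (Rpower x 1); [apply Rle_Rpower; lra|]. rewrite Rpower_1; lra.
    + assert (hkm : (k * m <= n)%nat) by (apply Nat.Div0.mul_div_le).
      assert (hkm2 : (n < k * S m)%nat) by (apply Nat.mul_succ_div_gt; lia).
      assert (hm1 : (1 <= m)%nat) by lia.
      assert (hn2 : (n <= 2 * k * m)%nat).
      { clearbody m. assert (k <= k * m)%nat by nia. rewrite Nat.mul_succ_r in hkm2. lia. }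
      specialize (hgr m hm1 hkm).
      set (X := alpha * INR v).
      assert (hvR : INR cu <= SN * INR v) by (unfold SN; rewrite <- mult_INR; apply le_INR; auto).
      assert (hxX : x <= X / C).
      { rewrite hxe. unfold X. apply (Rmult_le_reg_r (SN * C)); [lra|]. rewrite Rmult_assoc, Rinv_l; [|lra].
        replace (alpha * INR v / C * (SN * C)) with (alpha * (SN * INR v)) by (field; lra).
        rewrite Rmult_1_r. apply Rmult_le_compat; lra. }
      set (XC := X / C).
      assert (hXC : 1 < XC) by (unfold XC; lra).
      assert (hX0 : 0 < X) by (unfold XC in hXC; apply (Rmult_lt_reg_r (/ C)); [apply Rinv_0_lt_compat; lra|]; lra).
      assert (hmR : 1 <= INR m) by (apply (le_INR 1); auto).
      assert (hyb : y <= beta * INR m).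
      { rewrite hye. assert (hn2R : INR n <= 2 * INR k * INR m) by (replace (2 * INR k * INR m) with (INR (2 * k * m)) by (rewrite !mult_INR; simpl; lra); apply le_INR; lia).
        apply (Rmult_le_reg_r (2 * INR k)); [lra|]. unfold Rdiv. rewrite Rmult_assoc, Rinv_l; [|lra].
        assert (0 <= INR n) by apply pos_INR. nra. }
      assert (s1 : Rpower x y <= Rpower XC (beta * INR m)).
      { apply Rle_trans with (Rpower XC y); [apply Rle_Rpower_l; unfold XC; lra| apply Rle_Rpower; lra]. }
      assert (hCm : Rpower C (beta * INR m) = INR ((2 * k) ^ m)).
      { unfold C, CC. fold k. rewrite Rpower_mult. replace (1 / beta * (beta * INR m)) with (INR m) by (field; lra).
        rewrite Rpower_pow; [|lra]. rewrite pow_INR, mult_INR. reflexivity. }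
      assert (hkmR : INR (k * m + 1) <= INR ((2 * k) ^ m)) by (apply le_INR, pow2k; auto).
      assert (hprod : Rpower XC (beta * INR m) * Rpower C (beta * INR m) = Rpower X (beta * INR m)).
      { rewrite Rpower_mult_distr; [|lra|lra]. f_equal. unfold XC; field; lra. }
      rewrite rpow_pos in hgr; auto. rewrite mult_INR in hgr.
      assert (hpos : 0 < INR (k * m + 1)) by (apply lt_0_INR; lia).
      assert (hRp : 0 <= Rpower XC (beta * INR m)) by (unfold Rpower; left; apply exp_pos).
      assert (Rpower XC (beta * INR m) * INR (k * m + 1) <= INR (k * m + 1) * INR c).
      { eapply Rle_trans; [|exact hgr]. unfold X in hprod. rewrite <- hprod, hCm. apply Rmult_le_compat_l; auto. }
      assert (Rpower XC (beta * INR m) <= INR c) by nra.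
      lra.
Qed.

Open Scope R_scope.

Theorem lemma5p6 (alpha beta : R) (N : nat) (ha : 0 < alpha) (hb : 0 < beta) :
  exists alpha' beta' : R, 0 < alpha' /\ 0 < beta' /\
    forall G : Group, admissible G alpha beta N ->
      forall H : G -> Prop, is_subgroup G H -> fg_sub G H ->
        (virt_inf_center G H /\ ~ perfect_sub G H alpha' beta') \/
        (~ virt_inf_center G H /\ perfect_sub G H alpha' beta').
Proof.
  assert (hkR : 1 <= INR (kk N)) by (apply (le_INR 1); unfold kk; lia).
  assert (hC : 1 <= CC beta N) by (apply CC_ge1; auto).
  assert (hSN : 1 <= INR (S N)) by (apply (le_INR 1); lia).
  assert (hmin0 : 0 < Rmin alpha 1) by (apply Rmin_glb_lt; lra).
  assert (hbmin0 : 0 < Rmin beta 1) by (apply Rmin_glb_lt; lra).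
  exists (al' alpha beta N), (be' beta N).
  assert (ha' : 0 < al' alpha beta N).
  { unfold al'. unfold Rdiv. apply Rmult_lt_0_compat; auto. apply Rinv_0_lt_compat; nra. }
  assert (hb' : 0 < be' beta N).
  { unfold be'. unfold Rdiv. apply Rmult_lt_0_compat; auto. apply Rinv_0_lt_compat; nra. }
  split; auto. split; auto.
  intros G hadm H hH hfg.
  destruct (classic (virt_inf_center G H)) as [hv|hnv].
  - left. split; auto. apply coreB; auto.
  - right. split; auto. split; auto. intros L hL hLH hLi U hUf hUL hgenU.
    split; auto. intros cu hcu n c hn hc.
    destruct (coreA G alpha beta N hadm H hH hnv L hL hLH hLi U hUf hUL hgenU) as [v hv].
    destruct (hv cu hcu) as [hcuv hrest].
    destruct (Nat.eq_dec cu 0) as [e|ne].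
    + subst cu. simpl INR. rewrite Rmult_0_r. unfold rpow. destruct (Rle_dec 0 0); [apply pos_INR| lra].
    + destruct (hrest n c hc hn ltac:(lia)) as [hcuc hgr].
      apply (realA alpha beta N ha hb v cu n c); auto; lia.
Qed.
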